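(* Let $n\ge 2$. The following are equivalent: (i) the power graph $P(S_n)$ is $2$-connected; (ii) $P_0(S_n)$ is connected; (iii) $\widetilde P_0(S_n)$ is connected; (iv) $P_0(\mathcal T(S_n))$ is connected; (v) $\mathcal O_0(S_n)$ is connected; (vi) $n=2$, or neither $n$ nor $n-1$ is a prime.
   Context: The power graph $P(G)$ of a finite group $G$ has vertex set $G$, distinct $x,y$ adjacent iff one is a positive power of the other; a graph is $2$-connected if deleting any single vertex (with incident edges) leaves a connected graph. $G_0=G\setminus\{1\}$; $P_0(G)$ is $P(G)$ with vertex $1$ deleted. $\widetilde P_0(G)$: vertex set $\{[x]:x\in G_0\}$, $[x]=\{y:\langle y\rangle=\langle x\rangle\}$, distinct $[x],[y]$ adjacent iff some representatives are one a positive power of the other. $\mathcal O_0(G)$: vertices the element orders $\ne1$, distinct $m,m'$ adjacent iff one divides the other. For $\psi\in S_n$, $T_\psi$ is the partition of $n$ given by orbit lengths of $\langle\psi\rangle$; for $T=[m_1^{t_1},\dots,m_k^{t_k}]$, $T^a=[(m_i/\gcd(a,m_i))^{t_i\gcd(a,m_i)}]_i$. $P_0(\mathcal T(S_n))$: vertices the partitions of $n$ other than $[1^n]$, distinct $T,T'$ adjacent iff one is a power of the other. *)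

(* Defs.v *)
From mathcomp Require Import all_boot all_fingroup.
From Stdlib Require Import Relations.
Set Implicit Arguments. Unset Strict Implicit. Unset Printing Implicit Defensive.

Definition connected_on (T : Type) (V : T -> Prop) (e : T -> T -> Prop) : Prop :=
  forall x y, V x -> V y ->
    clos_refl_trans T (fun a b => V a /\ V b /\ e a b) x y.

Section PowerGraph.
Variable gT : finGroupType.

Definition ppow (x y : gT) : Prop := exists k : nat, (0 < k)%N /\ y = (x ^+ k)%g.

Definition padj (x y : gT) : Prop := x <> y /\ (ppow x y \/ ppow y x).

Definition power_graph_2connected : Prop :=
  forall v : gT, connected_on (fun x => x <> v) padj.

Definition P0_connected : Prop := connected_on (fun x : gT => x <> 1%g) padj.

Definition gen_class (x : gT) : {set gT} := [set y | <[y]>%g == <[x]>%g].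

Definition tP0_vertex (C : {set gT}) : Prop :=
  exists x : gT, x <> 1%g /\ C = gen_class x.

Definition tP0_adj (C D : {set gT}) : Prop :=
  C <> D /\ exists x y : gT, x \in C /\ y \in D /\ (ppow x y \/ ppow y x).

Definition tP0_connected : Prop := connected_on tP0_vertex tP0_adj.

Definition O0_vertex (m : nat) : Prop := m <> 1%N /\ exists x : gT, #[x]%g = m.
Definition O0_adj (m m' : nat) : Prop := m <> m' /\ (m %| m' \/ m' %| m).
Definition O0_connected : Prop := connected_on O0_vertex O0_adj.

End PowerGraph.

Definition is_partition (n : nat) (T : seq nat) : Prop :=
  sorted geq T /\ all (fun m => 0 < m) T /\ sumn T = n.

Definition part_pow (a : nat) (T : seq nat) : seq nat :=
  sort geq (flatten [seq nseq (gcdn a m) (m %/ gcdn a m) | m <- T]).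

Definition PT0_vertex (n : nat) (T : seq nat) : Prop :=
  is_partition n T /\ T <> nseq n 1%N.
Definition PT0_adj (T T' : seq nat) : Prop :=
  T <> T' /\ ((exists a, 0 < a /\ T' = part_pow a T) \/
              (exists a, 0 < a /\ T = part_pow a T')).
Definition PT0_connected (n : nat) : Prop := connected_on (PT0_vertex n) PT0_adj.

(* Main.v *)
Require Import Defs.
From mathcomp Require Import all_boot all_fingroup all_solvable.
From Stdlib Require Import Relations.
From mathcomp Require Import zify.
From Stdlib Require Import Classical.
Set Implicit Arguments. Unset Strict Implicit. Unset Printing Implicit Defensive.

Definition rstep (T : Type) (V : T -> Prop) (e : T -> T -> Prop) :=
  fun a b => V a /\ V b /\ e a b.

Lemma conn_trans (T : Type) (V : T -> Prop) e x y z :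
  clos_refl_trans T (rstep V e) x y -> clos_refl_trans T (rstep V e) y z ->
  clos_refl_trans T (rstep V e) x z.
Proof. by move=> H1 H2; apply: rt_trans H1 H2. Qed.

Lemma conn_sym (T : Type) (V : T -> Prop) (e : T -> T -> Prop) x y :
  (forall a b, e a b -> e b a) ->
  clos_refl_trans T (rstep V e) x y -> clos_refl_trans T (rstep V e) y x.
Proof.
move=> es; elim=> [a b [Va [Vb eab]]|a|a b c _ H1 _ H2].
- by apply: rt_step; split; [|split] => //; apply: es.
- exact: rt_refl.
- exact: rt_trans H2 H1.
Qed.

Lemma conn_step (T : Type) (V : T -> Prop) (e : T -> T -> Prop) x y :
  V x -> V y -> e x y -> clos_refl_trans T (rstep V e) x y.
Proof. by move=> Vx Vy exy; apply: rt_step. Qed.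

Lemma conn_inv (T : Type) (V : T -> Prop) (e : T -> T -> Prop) (P : T -> Prop) x y :
  (forall a b, P a -> V a -> V b -> e a b -> P b) ->
  P x -> clos_refl_trans T (rstep V e) x y -> P y.
Proof.
move=> HP Px H; move: Px; elim: H => [a b [Va [Vb eab]]|a|a b c _ H1 _ H2] Pa.
- exact: HP Pa Va Vb eab.
- done.
- exact: H2 (H1 Pa).
Qed.

Section Gen.
Variable gT : finGroupType.
Implicit Types x y z : gT.

Definition P0c x y := clos_refl_trans gT (rstep (fun a : gT => a <> 1%g) (@padj gT)) x y.

Lemma padj_sym x y : padj x y -> padj y x.
Proof. by case=> ne [h|h]; split; try (by move=> e; apply: ne); [right|left]. Qed.

Lemma P0c_sym x y : P0c x y -> P0c y x.
Proof. by move=> H; apply: conn_sym H; apply: padj_sym. Qed.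

Lemma P0c_trans x y z : P0c x y -> P0c y z -> P0c x z.
Proof. exact: conn_trans. Qed.

Lemma mem_cycle_ppow x y : (y \in <[x]>)%g -> ppow x y.
Proof.
case/cycleP=> i ->; exists (i + #[x]%g); split; first by rewrite addn_gt0 order_gt0 orbT.
by rewrite expgD expg_order mulg1.
Qed.

Lemma conn_pow x y : x <> 1%g -> y <> 1%g -> (y \in <[x]>)%g -> P0c x y.
Proof.
move=> x1 y1 yx; case: (eqVneq x y) => [->|nxy]; first exact: rt_refl.
apply: conn_step => //; split; first by apply/eqP.
by left; apply: mem_cycle_ppow.
Qed.

Lemma conn_K x y : commute x y -> coprime #[x]%g #[y]%g -> x <> 1%g -> y <> 1%g -> P0c x y.
Proof.
move=> cxy cop x1 y1.
have xz : (x \in <[x * y]>)%g.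
  by apply: (subsetP (cycleMsub cxy cop)); apply: cycle_id.
have yz : (y \in <[x * y]>)%g.
  rewrite cxy; apply: (subsetP (cycleMsub (esym cxy) _)); last exact: cycle_id.
  by rewrite coprime_sym.
have z1 : (x * y <> 1)%g.
  move=> e; move: xz; rewrite e cycle1 inE => /eqP; exact: x1.
apply: P0c_trans (_ : P0c (x * y) y); first exact: P0c_sym (conn_pow z1 x1 xz).
exact: conn_pow.
Qed.

Lemma ord_prime x p : prime p -> (x ^+ p = 1)%g -> x <> 1%g -> #[x]%g = p.
Proof.
move=> pp xp x1; have : (#[x]%g %| p) by rewrite order_dvdn xp.
case/primeP: pp => _ H /H /orP [/eqP o1|/eqP //].
by case: x1; apply/eqP; rewrite -order_eq1 o1.
Qed.

Lemma commute_conj x y : (x ^ y = x)%g -> commute x y.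
Proof. by move=> e; rewrite /commute conjgC e. Qed.

End Gen.

Section Perm.
Variable T : finType.
Implicit Types s x y : {perm T}.

Lemma pick_out (L : seq T) : size L < #|T| -> exists z, z \notin L.
Proof.
move=> lt; case: (boolP [exists z, z \notin L]) => [/existsP //|/existsPn H].
have : #|T| <= size L.
  apply: leq_trans (card_size L); apply: subset_leq_card; apply/subsetP => z _.
  by move: (H z); rewrite negbK.
by rewrite leqNgt lt.
Qed.

Lemma commute_tperm s (u v : T) : s u = u -> s v = v -> commute s (tperm u v).
Proof.
move=> su sv; apply: commute_sym; apply: commute_conj.
by rewrite tpermJ su sv.
Qed.

Lemma tperm_ne1 (u v : T) : u != v -> tperm u v <> 1%g.
Proof. by move=> nuv e; move: (tpermL u v); rewrite e perm1 => /eqP; rewrite (negbTE nuv). Qed.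

Lemma order_tperm (u v : T) : u != v -> #[tperm u v]%g = 2.
Proof.
move=> nuv; apply: ord_prime => //; last exact: tperm_ne1.
by rewrite expgS expg1 tperm2.
Qed.

Definition c3 (u v w : T) : {perm T} := (tperm u v * tperm v w)%g.

Lemma c3_out (u v w z : T) : z != u -> z != v -> z != w -> c3 u v w z = z.
Proof. by move=> zu zv zw; rewrite /c3 permM !tpermD // eq_sym. Qed.

Lemma c3_u (u v w : T) : u != v -> u != w -> v != w -> c3 u v w u = w.
Proof. by move=> uv uw vw; rewrite /c3 permM tpermL tpermL. Qed.

Lemma c3_v (u v w : T) : u != v -> u != w -> v != w -> c3 u v w v = u.
Proof. by move=> uv uw vw; rewrite /c3 permM tpermR tpermD // eq_sym. Qed.

Lemma c3_w (u v w : T) : u != v -> u != w -> v != w -> c3 u v w w = v.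
Proof. by move=> uv uw vw; rewrite /c3 permM (tpermD uw vw) tpermR. Qed.

Lemma cube_app s (z : T) : (s ^+ 3)%g z = s (s (s z)).
Proof. by rewrite !expgS expg0 mulg1 !permM. Qed.

Lemma c3_cube (u v w : T) : u != v -> u != w -> v != w -> (c3 u v w ^+ 3 = 1)%g.
Proof.
move=> uv uw vw; apply/permP => z; rewrite perm1 cube_app.
case: (eqVneq z u) => [->|zu]; first by rewrite c3_u // c3_w // c3_v.
case: (eqVneq z v) => [->|zv]; first by rewrite c3_v // c3_u // c3_w.
case: (eqVneq z w) => [->|zw]; first by rewrite c3_w // c3_v // c3_u.
by rewrite !c3_out.
Qed.

Lemma c3_ne1 (u v w : T) : u != v -> u != w -> v != w -> c3 u v w <> 1%g.
Proof. by move=> uv uw vw e; move: (c3_u uv uw vw); rewrite e perm1 => /eqP; rewrite (negbTE uw). Qed.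

Lemma order_c3 (u v w : T) : u != v -> u != w -> v != w -> #[c3 u v w]%g = 3.
Proof. by move=> uv uw vw; apply: ord_prime => //; [apply: c3_cube | apply: c3_ne1]. Qed.

Lemma commute_c3 s (u v w : T) : s u = u -> s v = v -> s w = w -> commute s (c3 u v w).
Proof. by move=> su sv sw; apply: commuteM; apply: commute_tperm. Qed.

End Perm.

Section Orb.
Variable T : finType.
Implicit Types s x y : {perm T}.

Lemma comm_app s t (z : T) : commute s t -> s (t z) = t (s z).
Proof. by move=> c; rewrite -!permM c. Qed.

Lemma fix_iter s (z : T) m : s z = z -> (s ^+ m)%g z = z.
Proof. by move=> sz; elim: m => [|m IH]; rewrite ?expg0 ?perm1 // expgS permM sz. Qed.

Lemma fix_pow x p k (z : T) : prime p -> #[x]%g = p -> ~~ (p %| k) ->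
  (x ^+ k)%g z = z -> x z = z.
Proof.
move=> pp ox npk fz.
have g : generator <[x]>%g (x ^+ k)%g by rewrite generator_coprime ox prime_coprime.
have : (x \in <[x ^+ k]>)%g by rewrite -(eqP g) cycle_id.
by case/cycleP=> m ->; apply: fix_iter.
Qed.

Lemma orbit_inj_le x p (a : T) i j : prime p -> #[x]%g = p -> x a != a ->
  i <= j -> j < p -> (x ^+ i)%g a = (x ^+ j)%g a -> i = j.
Proof.
move=> pp ox xa ij jp e.
have [k kj] : exists k, j = i + k by exists (j - i); rewrite subnKC.
subst j.
case: k e jp ij => [|k] e jp ij; first by rewrite addn0.
exfalso; move: e; rewrite expgD permM => e.
have kp : ~~ (p %| k.+1).
  apply/negP => /dvdn_leq => /(_ isT) le; move: jp; rewrite ltnNge.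
  by rewrite (leq_trans le) // leq_addl.
have := fix_pow pp ox kp (esym e).
rewrite (comm_app _ (commuteX i (commute_refl x))) => /perm_inj.
by move/eqP; rewrite (negbTE xa).
Qed.

Lemma orbit_inj x p (a : T) i j : prime p -> #[x]%g = p -> x a != a ->
  i < p -> j < p -> (x ^+ i)%g a = (x ^+ j)%g a -> i = j.
Proof.
move=> pp ox xa ip jp e; case: (leqP i j) => ij.
  exact: (orbit_inj_le pp ox xa ij jp e).
by apply/esym; apply: (orbit_inj_le pp ox xa (ltnW ij) ip (esym e)).
Qed.

Lemma moved_pt x : x <> 1%g -> exists a : T, x a != a.
Proof.
move=> x1; case: (boolP [exists a, x a != a]) => [/existsP //|/existsPn H].
by case: x1; apply/permP => z; rewrite perm1; move: (H z); rewrite negbK => /eqP.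
Qed.

Lemma commute_in_cycle y x p : prime p -> #[y]%g = p -> #|T| <= p.+1 ->
  commute x y -> (x \in <[y]>)%g.
Proof.
move=> pp oy cT cxy.
have y1 : y <> 1%g by move=> e; move: oy; rewrite e order1 => e1; move: pp; rewrite -e1.
have [a ya] := moved_pt y1.
have yp : (y ^+ p = 1)%g by rewrite -oy expg_order.
pose I := [set (y ^+ (val i))%g a | i : 'I_p].
have inI m : (y ^+ m)%g a \in I.
  rewrite -expg_mod_order oy; apply/imsetP.
  by exists (Ordinal (ltn_pmod m (prime_gt0 pp))).
have cI : #|I| = p.
  rewrite card_imset ?card_ord // => i j e.
  by apply: val_inj; exact: (orbit_inj pp oy ya (ltn_ord i) (ltn_ord j) e).
have le1 : #|~: I| <= 1.
  by rewrite -(leq_add2l p) addn1 -{1}cI cardsC.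
have uniqC z1 z2 : z1 \notin I -> z2 \notin I -> z1 = z2.
  move=> h1 h2; move/card_le1_eqP: le1 => H; by apply: H; rewrite inE.
have yI m : y ((y ^+ m)%g a) != (y ^+ m)%g a.
  rewrite (comm_app _ (commuteX m (commute_refl y))).
  by apply/negP => /eqP /perm_inj /eqP; rewrite (negbTE ya).
have yout z : z \notin I -> y z = z.
  move=> zI; apply: uniqC => //; apply/negP => /imsetP [i _ e].
  move: zI; have -> : z = (y ^+ (i + p.-1))%g a.
    apply: (@perm_inj _ y); rewrite e -permM -expgSr -addnS prednK ?prime_gt0 //.
    by rewrite expgD yp mulg1.
  by rewrite inI.
have fixout z : y z = z -> z \notin I.
  by move=> yz; apply/negP => /imsetP [i _ e]; move: (yI i); rewrite -e yz eqxx.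
have xaI : x a \in I.
  apply/negPn/negP => xa; move: (yout _ xa); rewrite -(comm_app _ cxy) => /perm_inj /eqP.
  by rewrite (negbTE ya).
case/imsetP: xaI => j _ xaj.
have -> : x = (y ^+ j)%g.
  apply/permP => z; case: (boolP (z \in I)) => [/imsetP [i _ ->]|zI].
    rewrite (comm_app _ (commuteX i cxy)) xaj.
    by rewrite (comm_app _ (commuteX2 i j (commute_refl y))).
  have yz := yout z zI; rewrite fix_iter //.
  apply: uniqC zI; apply: fixout; by rewrite -(comm_app _ cxy) yz.
exact: mem_cycle.
Qed.

End Orb.

Lemma mem_order_dvd (gT : finGroupType) (a y : gT) : (a \in <[y]>)%g -> (#[a]%g %| #[y]%g).
Proof. by move=> ay; apply: (@order_dvdG _ <[y]>%G). Qed.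

Lemma big_order_prime (T : finType) (w : {perm T}) p : prime p -> #|T| <= p.+1 ->
  p %| #[w]%g -> #[w]%g = p.
Proof.
move=> pp cT pw.
have oz : #[(w ^+ (#[w]%g %/ p))%g]%g = p.
  rewrite orderXdiv ?dvdn_div // -{1}(divnK pw) mulKn // divn_gt0 ?prime_gt0 //.
  exact: dvdn_leq (order_gt0 _) pw.
have := commute_in_cycle pp oz cT (commuteX _ (commute_refl w)).
move/mem_order_dvd; rewrite oz.
case/primeP: pp => p1 H /H /orP [/eqP o1|/eqP //].
by move: pw; rewrite o1 dvdn1 => /eqP e; move: p1; rewrite e.
Qed.

Lemma P0_disconn (n p : nat) : prime p -> 3 <= p -> p <= n <= p.+1 ->
  ~ P0_connected {perm 'I_n}.
Proof.
move=> pp p3 /andP [pn np] H.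
have dv : p %| #|[set: {perm 'I_n}]%G|.
  by rewrite cardsT card_Sn dvdn_fact // prime_gt0.
have [y _ oy] := Cauchy pp dv.
have n2 : 1 < n by apply: leq_trans pn; apply: leq_trans p3.
pose t := tperm (Ordinal (ltnW n2)) (Ordinal n2).
have cT : #|'I_n| <= p.+1 by rewrite card_ord.
have y1 : y <> 1%g by move=> e; move: oy; rewrite e order1 => e1; move: pp; rewrite -e1.
have t1 : t <> 1%g by apply: tperm_ne1.
have : (t \in <[y]>)%g.
  apply: (conn_inv (P := fun z => (z \in <[y]>)%g) _ (cycle_id y) (H y t y1 t1)).
  move=> a b ay a1 b1 [_ [[k [_ ->]]|[k [_ ea]]]].
    by apply: groupX.
  have oa : #[a]%g = p.
    have := mem_order_dvd ay; rewrite oy.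
    case/primeP: pp => _ Hp /Hp /orP [/eqP o1|/eqP //].
    by case: a1; apply/eqP; rewrite -order_eq1 o1.
  have : (b \in <[a]>)%g.
    by apply: (commute_in_cycle pp oa cT); rewrite ea; apply: commuteX.
  by move=> ba; apply: (subsetP _ _ ba); rewrite cycle_subG.
move/mem_order_dvd; rewrite oy order_tperm // => d2.
case/primeP: pp => _ Hp; move: (Hp 2 d2) => /orP [//|/eqP e].
by move: p3; rewrite -e.
Qed.

Lemma O0_disconn (n p : nat) : prime p -> 3 <= p -> p <= n <= p.+1 ->
  ~ O0_connected {perm 'I_n}.
Proof.
move=> pp p3 /andP [pn np] H.
have dv : p %| #|[set: {perm 'I_n}]%G|.
  by rewrite cardsT card_Sn dvdn_fact // prime_gt0.
have [y _ oy] := Cauchy pp dv.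
have n2 : 1 < n by apply: leq_trans pn; apply: leq_trans p3.
pose t := tperm (Ordinal (ltnW n2)) (Ordinal n2).
have cT : #|'I_n| <= p.+1 by rewrite card_ord.
have p1 : p <> 1 by move=> e; move: pp; rewrite e.
have Vp : O0_vertex {perm 'I_n} p by split => //; exists y.
have Vt : O0_vertex {perm 'I_n} 2 by split => //; exists t; apply: order_tperm.
have : 2 = p.
  apply: (conn_inv (P := fun m => m = p) _ (erefl p) (H p 2 Vp Vt)).
  move=> a b -> _ [b1 [w ow]] [nb [pb|bp]].
    by case: nb; rewrite -ow (big_order_prime pp cT) // ow.
  case/primeP: pp => _ Hp; move: (Hp b bp) => /orP [/eqP //|/eqP e].
  by case: nb.
by move=> e; move: p3; rewrite -e.
Qed.

Lemma conn_map (A B : Type) (V : A -> Prop) (e : A -> A -> Prop) (V' : B -> Prop)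
  (e' : B -> B -> Prop) (f : A -> B) x y :
  (forall a, V a -> V' (f a)) ->
  (forall a b, V a -> V b -> e a b -> f a = f b \/ e' (f a) (f b)) ->
  clos_refl_trans A (rstep V e) x y -> clos_refl_trans B (rstep V' e') (f x) (f y).
Proof.
move=> HV He; elim=> [a b [Va [Vb eab]]|a|a b c _ H1 _ H2].
- case: (He a b Va Vb eab) => [->|h]; first exact: rt_refl.
  by apply: rt_step; split; [|split] => //; apply: HV.
- exact: rt_refl.
- exact: rt_trans H1 H2.
Qed.

Section Bridges.
Variable gT : finGroupType.
Implicit Types x y : gT.

Lemma ppow1 x : ppow x 1%g.
Proof. by exists #[x]%g; rewrite order_gt0 expg_order. Qed.

Lemma two_conn_iff : power_graph_2connected gT <-> P0_connected gT.
Proof.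
split; first by move=> H; apply: H.
move=> H v x y xv yv.
case: (eqVneq v 1%g) => [ev|v1].
  by subst v; apply: H.
have to1 z : z <> v -> clos_refl_trans gT (rstep (fun z => z <> v) (@padj gT)) z 1%g.
  move=> zv; case: (eqVneq z 1%g) => [->|z1]; first exact: rt_refl.
  apply: rt_step; split => //; split; first by move=> e; rewrite e eqxx in v1.
  by split; [apply/eqP | left; apply: ppow1].
apply: conn_trans (to1 x xv) _; apply: conn_sym (to1 y yv).
exact: padj_sym.
Qed.

Lemma O0_of_P0 : P0_connected gT -> O0_connected gT.
Proof.
move=> H m m' [m1 [x ox]] [m'1 [x' ox']].
have x1 : x <> 1%g by move=> e; apply: m1; rewrite -ox e order1.
have x'1 : x' <> 1%g by move=> e; apply: m'1; rewrite -ox' e order1.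
rewrite -ox -ox'.
apply: (conn_map (f := fun z : gT => #[z]%g) _ _ (H x x' x1 x'1)).
  move=> a a1; split; last by exists a.
  by move=> e; apply: a1; apply/eqP; rewrite -order_eq1 e.
move=> a b a1 b1 [_ h].
case: (eqVneq #[a]%g #[b]%g) => [->|ne]; first by left.
right; split; first by apply/eqP.
case: h => [[k [_ ->]]|[k [_ ->]]].
  by right; apply: orderXdvd.
by left; apply: orderXdvd.
Qed.

Lemma in_class x y : (y \in gen_class x) = (<[y]>%g == <[x]>%g).
Proof. by rewrite inE. Qed.

Lemma class_ne1 x y : x <> 1%g -> y \in gen_class x -> y <> 1%g.
Proof.
move=> x1; rewrite in_class => /eqP e y1; apply: x1; apply/eqP.
by rewrite -cycle_eq1 -e y1 cycle1.
Qed.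

Lemma class_conn x u w : x <> 1%g -> u \in gen_class x -> w \in gen_class x -> P0c u w.
Proof.
move=> x1 ux wx; apply: conn_pow; [exact: class_ne1 ux|exact: class_ne1 wx|].
by move: ux wx; rewrite !in_class => /eqP -> /eqP <-; apply: cycle_id.
Qed.

Lemma tp_path C D :
  clos_refl_trans_1n _ (rstep (@tP0_vertex gT) (@tP0_adj gT)) C D ->
  tP0_vertex C -> forall u w, u \in C -> w \in D -> P0c u w.
Proof.
elim=> [{}C|{}C B {}D [VC [VB [nCB [a [b [aC [bB ab]]]]]]] _ IH].
  move=> [c [c1 ->]] u w uC wC; apply: P0c_trans (class_conn c1 uC (_ : c \in _) ) _.
    by rewrite in_class.
  by apply: class_conn c1 _ wC; rewrite in_class.
move=> [c [c1 eC]] u w uC wD.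
have VB' := VB; case: VB => [d [d1 eB]].
have a1 : a <> 1%g by apply: class_ne1 c1 _; rewrite -eC.
have b1 : b <> 1%g by apply: class_ne1 d1 _; rewrite -eB.
apply: P0c_trans (_ : P0c u a) _.
  by apply: class_conn c1 _ _; rewrite -eC.
apply: P0c_trans (_ : P0c a b) _.
  apply: conn_step => //; split => // eab; apply: nCB; rewrite eC eB.
  subst b; move: aC bB; rewrite eC eB !in_class => /eqP e1 /eqP e2.
  by rewrite /gen_class -e1 -e2.
exact: (IH VB' b w bB wD).
Qed.

Lemma tP0_iff : tP0_connected gT <-> P0_connected gT.
Proof.
split=> H.
- move=> x y x1 y1.
  have Hc := H _ _ (ex_intro _ x (conj x1 (erefl _))) (ex_intro _ y (conj y1 (erefl _))).
  apply: (tp_path (clos_rt_rt1n _ _ _ _ Hc)); first by exists x.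
    by rewrite in_class.
  by rewrite in_class.
- move=> C D [x [x1 ->]] [y [y1 ->]].
  apply: (conn_map (f := fun z => gen_class z) _ _ (H x y x1 y1)).
    by move=> a a1; exists a.
  move=> a b a1 b1 [_ h].
  case: (eqVneq (gen_class a) (gen_class b)) => [->|ne]; first by left.
  right; split; first by apply/eqP.
  by exists a, b; rewrite !in_class !eqxx.
Qed.

End Bridges.

Section Conn.
Variable T : finType.
Hypothesis hT : 9 <= #|T|.
Implicit Types x y s : {perm T}.

Lemma pick1 (L : seq T) : size L < #|T| -> exists z, z \notin L.
Proof. exact: pick_out. Qed.

Lemma pick2 (L : seq T) : size L + 2 <= 9 ->
  exists u v, [/\ u \notin L, v \notin L & u != v].
Proof.
move=> h9; have h : size L + 2 <= #|T| by apply: leq_trans hT. have [u uL] := pick1 (L := L) (ltac:(lia)).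
have h2 : size (u :: L) < #|T| by rewrite /=; move: h; set k := #|T|; lia.
have [v vL] := pick1 h2.
move: vL; rewrite inE negb_or => /andP [vu vL].
by exists u, v; split => //; rewrite eq_sym.
Qed.

Lemma pick3 (L : seq T) : size L + 3 <= 9 ->
  exists u v w, [/\ u \notin L, v \notin L, w \notin L & [&& u != v, u != w & v != w]].
Proof.
move=> h9; have h : size L + 3 <= #|T| by apply: leq_trans hT. have [u [v [uL vL uv]]] := pick2 (L := L) (ltac:(lia)).
have h2 : size (u :: v :: L) < #|T| by rewrite /=; move: h; set k := #|T|; lia.
have [w wL] := pick1 h2.
move: wL; rewrite !inE !negb_or => /and3P [wu wv wL].
by exists u, v, w; split => //; rewrite uv eq_sym wu eq_sym wv.
Qed.

Lemma coprime23 : coprime 2 3. Proof. by []. Qed.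

Variables u0 v0 : T.
Hypothesis uv0 : u0 != v0.
Let h := tperm u0 v0.

Lemma c3_commute_tperm (a b d u v : T) : a != b -> a != d -> b != d ->
  u \notin [:: a; b; d] -> v \notin [:: a; b; d] -> commute (tperm u v) (c3 a b d).
Proof.
move=> ab ad bd; rewrite !inE !negb_or => /and3P [ua ub ud] /and3P [va vb vd].
apply: commute_c3; exact: tpermD.
Qed.

Lemma tr_hub (u v : T) : u != v -> P0c (tperm u v) h.
Proof.
move=> uv.
have [a [b [d [aL bL dL /and3P [ab ad bd]]]]] := pick3 (L := [:: u; v; u0; v0]) isT.
have c1 := c3_ne1 ab ad bd; have oc := order_c3 ab ad bd.
have h1 : h <> 1%g by apply: tperm_ne1.
move: aL bL dL; rewrite !inE !negb_or => /and4P [au av au0 av0] /and4P [bu bv bu0 bv0] /and4P [du dv du0 dv0].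
have e1 : commute (tperm u v) (c3 a b d).
  by apply: c3_commute_tperm => //; rewrite !inE !negb_or; apply/and3P; split; rewrite eq_sym.
have e2 : commute (c3 a b d) h.
  by apply: commute_sym; apply: c3_commute_tperm => //; rewrite !inE !negb_or; apply/and3P; split; rewrite eq_sym.
apply: P0c_trans (_ : P0c (tperm u v) (c3 a b d)) _.
  by apply: conn_K => //; [rewrite order_tperm // oc | apply: tperm_ne1].
by apply: conn_K => //; rewrite oc /h order_tperm.
Qed.

Lemma fix2_hub x (u v : T) : x <> 1%g -> coprime #[x]%g 2 -> x u = u -> x v = v ->
  u != v -> P0c x h.
Proof.
move=> x1 cp xu xv uv.
apply: P0c_trans (tr_hub uv).
by apply: conn_K => //; [apply: commute_tperm | rewrite order_tperm | apply: tperm_ne1].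
Qed.

Lemma c3_hub (a b d : T) : a != b -> a != d -> b != d -> P0c (c3 a b d) h.
Proof.
move=> ab ad bd.
have [u [v [uL vL uv]]] := pick2 (L := [:: a; b; d]) isT.
move: uL vL; rewrite !inE !negb_or => /and3P [ua ub ud] /and3P [va vb vd].
apply: (fix2_hub (u := u) (v := v)) => //.
- exact: c3_ne1.
- by rewrite order_c3.
- exact: c3_out.
- exact: c3_out.
Qed.

Lemma inv_hub x : (x ^+ 2 = 1)%g -> x <> 1%g -> P0c x h.
Proof.
move=> x2 x1.
have ox : #[x]%g = 2 by apply: ord_prime.
have xx z : x (x z) = z.
  by rewrite -permM (_ : (x * x = x ^+ 2)%g) ?x2 ?perm1 // expgS expg1.
case: (boolP [exists u, exists v, exists w,
   [&& u != v, u != w, v != w, x u == u, x v == v & x w == w]]).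
  case/existsP=> u /existsP [v /existsP [w /and3P [uv uw /and4P [vw /eqP xu /eqP xv /eqP xw]]]].
  apply: P0c_trans (c3_hub uv uw vw).
  apply: conn_K => //; [exact: commute_c3 | by rewrite ox order_c3 | exact: c3_ne1].
move=> nofix.
have moved_out (L : seq T) : size L + 3 <= 9 -> exists z, z \notin L /\ x z != z.
  move=> hL; have [u [v [w [uL vL wL /and3P [uv uw vw]]]]] := pick3 hL.
  case: (eqVneq (x u) u) => xu; last by exists u.
  case: (eqVneq (x v) v) => xv; last by exists v.
  case: (eqVneq (x w) w) => xw; last by exists w.
  move/existsPn: nofix => /(_ u) /existsPn /(_ v) /existsPn /(_ w).
  by rewrite uv uw vw xu xv xw !eqxx.
have xne z w : z != x w -> x z != w.
  by move=> zw; apply/eqP => e; move: zw; rewrite -e xx eqxx.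
have [a1 [_ xa1]] := moved_out [::] isT.
have [b1 [bL xb1]] := moved_out [:: a1; x a1] isT.
have [c1 [cL xc1]] := moved_out [:: a1; x a1; b1; x b1] isT.
move: bL cL; rewrite !inE !negb_or => /andP [b1a1 b1a'] /and4P [c1a1 c1a' c1b1 c1b'].
have a'b1 : x a1 != b1 by rewrite eq_sym.
have a'c1 : x a1 != c1 by rewrite eq_sym.
have b'a1 : x b1 != a1 by apply: xne.
have b'c1 : x b1 != c1 by rewrite eq_sym.
have c'a1 : x c1 != a1 by apply: xne.
have c'b1 : x c1 != b1 by apply: xne.
have a'b' : x a1 != x b1 by rewrite (inj_eq perm_inj) eq_sym.
have a'c' : x a1 != x c1 by rewrite (inj_eq perm_inj) eq_sym.
have b'c' : x b1 != x c1 by rewrite (inj_eq perm_inj) eq_sym.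
have a1b1 : a1 != b1 by rewrite eq_sym.
have a1c1 : a1 != c1 by rewrite eq_sym.
have b1c1 : b1 != c1 by rewrite eq_sym.
pose P := c3 a1 b1 c1; pose Q := c3 (x a1) (x b1) (x c1).
have PQ : commute P Q by apply: commute_c3; apply: c3_out; rewrite // eq_sym.
pose c := (P * Q)%g.
have c3' : (c ^+ 3 = 1)%g by rewrite expgMn // c3_cube // c3_cube // mulg1.
have c1' : c <> 1%g.
  move=> e; have : c a1 = a1 by rewrite e perm1.
  rewrite permM /P c3_u // /Q c3_out ?(eq_sym c1) //; first by move/eqP; rewrite eq_sym (negbTE a1c1).
have oc : #[c]%g = 3 by apply: ord_prime.
have xc : commute x c.
  apply: commute_sym; apply: commute_conj.
  rewrite conjMg /P /Q /c3 !conjMg !tpermJ !xx.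
  exact: (esym PQ).
have [u [v [uL vL uv]]] := pick2 (L := [:: a1; x a1; b1; x b1; c1; x c1]) isT.
have cfix z : z \notin [:: a1; x a1; b1; x b1; c1; x c1] -> c z = z.
  rewrite !inE !negb_or => /and4P [za za' zb /and3P [zb' zc zc']].
  by rewrite permM /P /Q !c3_out.
apply: P0c_trans (_ : P0c x c) _.
  by apply: conn_K => //; rewrite ox oc.
apply: (fix2_hub (u := u) (v := v)) => //; [by rewrite oc | exact: cfix | exact: cfix].
Qed.

End Conn.

Section Swap.
Variable T : finType.
Variables (x : {perm T}) (p : nat) (a b : T).
Hypotheses (pp : prime p) (ox : #[x]%g = p) (xa : x a != a) (xb : x b != b)
  (nab : forall i, (x ^+ i)%g a != b).

Lemma powA i j (z : T) : (x ^+ j)%g ((x ^+ i)%g z) = (x ^+ (i + j))%g z.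
Proof. by rewrite -permM -expgD. Qed.

Lemma ipow z i : (x ^+ (p.-1 * i))%g ((x ^+ i)%g z) = z.
Proof.
rewrite powA -mulSn prednK ?prime_gt0 // expgM -ox expg_order expg1n perm1 //.
Qed.

Lemma ab_ne i j : (x ^+ i)%g b != (x ^+ j)%g a.
Proof.
apply/eqP => e; move: (ipow b i); rewrite e powA => e2.
by move: (nab (j + p.-1 * i)); rewrite e2 eqxx.
Qed.

Lemma modp_eq (z : T) i : (x ^+ (i %% p))%g z = (x ^+ i)%g z.
Proof. by rewrite -ox expg_mod_order. Qed.

Lemma ltp i : i %% p < p.
Proof. by rewrite ltn_pmod ?prime_gt0. Qed.

Definition sw (z : T) : T :=
  if [pick i : 'I_p | (x ^+ i)%g a == z] is Some i then (x ^+ i)%g b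
  else if [pick i : 'I_p | (x ^+ i)%g b == z] is Some i then (x ^+ i)%g a
  else z.

Lemma sw_a i : sw ((x ^+ i)%g a) = (x ^+ i)%g b.
Proof.
rewrite /sw; case: pickP => [j /eqP e|H].
  rewrite -(modp_eq _ i) in e; have := orbit_inj pp ox xa (ltn_ord j) (ltp i) e.
  by move=> ->; rewrite modp_eq.
by move: (H (Ordinal (ltp i))); rewrite /= modp_eq eqxx.
Qed.

Lemma sw_b i : sw ((x ^+ i)%g b) = (x ^+ i)%g a.
Proof.
rewrite /sw; case: pickP => [j /eqP e|_].
  by move: (ab_ne i j); rewrite e eqxx.
case: pickP => [j /eqP e|H].
  rewrite -(modp_eq _ i) in e; have := orbit_inj pp ox xb (ltn_ord j) (ltp i) e.
  by move=> ->; rewrite modp_eq.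
by move: (H (Ordinal (ltp i))); rewrite /= modp_eq eqxx.
Qed.

Lemma sw_o z : (forall i, (x ^+ i)%g a != z) -> (forall i, (x ^+ i)%g b != z) -> sw z = z.
Proof.
move=> ha hb; rewrite /sw; case: pickP => [j /eqP e|_].
  by move: (ha j); rewrite e eqxx.
case: pickP => [j /eqP e|_] //.
by move: (hb j); rewrite e eqxx.
Qed.

Lemma sw_cases z : (exists i, z = (x ^+ i)%g a) \/ (exists i, z = (x ^+ i)%g b) \/
  ((forall i, (x ^+ i)%g a != z) /\ (forall i, (x ^+ i)%g b != z)).
Proof.
case: (boolP [exists i : 'I_p, (x ^+ i)%g a == z]) => [/existsP [i /eqP <-]|/existsPn ha].
  by left; exists i.
case: (boolP [exists i : 'I_p, (x ^+ i)%g b == z]) => [/existsP [i /eqP <-]|/existsPn hb].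
  by right; left; exists i.
right; right; split=> i; rewrite -modp_eq.
  exact: (ha (Ordinal (ltp i))).
exact: (hb (Ordinal (ltp i))).
Qed.

Lemma sw_inv : involutive sw.
Proof.
move=> z; case: (sw_cases z) => [[i ->]|[[i ->]|[ha hb]]].
- by rewrite sw_a sw_b.
- by rewrite sw_b sw_a.
- by rewrite !sw_o.
Qed.

Definition swp : {perm T} := perm (can_inj sw_inv).

Lemma swpE z : swp z = sw z.
Proof. by rewrite permE. Qed.

Lemma swp_comm : commute x swp.
Proof.
apply/permP => z; rewrite !permM !swpE.
have xs i (w : T) : x ((x ^+ i)%g w) = (x ^+ i.+1)%g w by rewrite -permM -expgSr.
case: (sw_cases z) => [[i ->]|[[i ->]|[ha hb]]].
- by rewrite sw_a xs sw_a xs.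
- by rewrite sw_b xs sw_b xs.
- have hxa i : (x ^+ i)%g a != x z.
    apply/eqP => e.
    by move: (ipow z 1); rewrite expg1 -e powA => e2; move: (ha (i + p.-1 * 1)); rewrite e2 eqxx.
  have hxb i : (x ^+ i)%g b != x z.
    apply/eqP => e.
    by move: (ipow z 1); rewrite expg1 -e powA => e2; move: (hb (i + p.-1 * 1)); rewrite e2 eqxx.
  by rewrite (sw_o hxa hxb) (sw_o ha hb).
Qed.

Lemma swp2 : (swp ^+ 2 = 1)%g.
Proof. by apply/permP => z; rewrite expgS expg1 permM !swpE sw_inv perm1. Qed.

Lemma swp_ne1 : swp <> 1%g.
Proof.
move=> e; have : swp a = a by rewrite e perm1.
rewrite swpE; have := sw_a 0; rewrite expg0 !perm1 => -> ba.
by move: (nab 0); rewrite expg0 perm1 ba eqxx.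
Qed.

End Swap.

Lemma order_div_prime (gT : finGroupType) (w : gT) p : prime p -> p %| #[w]%g ->
  #[(w ^+ (#[w]%g %/ p))%g]%g = p.
Proof.
move=> pp pw.
rewrite orderXdiv ?dvdn_div // -{1}(divnK pw) mulKn // divn_gt0 ?prime_gt0 //.
exact: dvdn_leq (order_gt0 _) pw.
Qed.

Section Conn2.
Variable T : finType.
Hypothesis hT : 9 <= #|T|.
Hypothesis npn : ~ prime #|T|.
Hypothesis npn1 : ~ prime #|T|.-1.
Variables u0 v0 : T.
Hypothesis uv0 : u0 != v0.

Lemma odd_hub (x : {perm T}) p : prime p -> p != 2 -> #[x]%g = p -> P0c x (tperm u0 v0).
Proof.
move=> pp p2 ox.
have cp2 : coprime p 2.
  rewrite prime_coprime //; apply/negP => d2.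
  case/primeP: (isT : prime 2) => _ H; move: (H p d2) => /orP [/eqP p1|/eqP e].
    by move: pp; rewrite p1.
  by rewrite e eqxx in p2.
have x1 : x <> 1%g by move=> e; move: ox; rewrite e order1 => e1; move: pp; rewrite -e1.
case: (boolP [exists u, exists v, [&& u != v, x u == u & x v == v]]).
  case/existsP=> u /existsP [v /and3P [uv /eqP xu /eqP xv]].
  by apply: (fix2_hub hT uv0 (u := u) (v := v)) => //; rewrite ox.
move=> nofix.
have nf (u v : T) : x u = u -> x v = v -> u = v.
  move=> xu xv; apply/eqP; apply/negPn/negP => uv.
  move/existsPn: nofix => /(_ u) /existsPn /(_ v); by rewrite uv xu xv !eqxx.
have [a xa] : exists a, x a != a.
  have [u [v [_ _ uv]]] := pick2 hT (L := [::]) isT.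
  case: (eqVneq (x u) u) => xu; last by exists u.
  case: (eqVneq (x v) v) => xv; last by exists v.
  by move: uv; rewrite (nf u v xu xv) eqxx.
case: (boolP [exists z, (x z != z) && [forall i : 'I_p, (x ^+ i)%g a != z]]).
  case/existsP=> b /andP [xb /forallP nab'].
  have nab i : (x ^+ i)%g a != b.
    by rewrite -(modp_eq ox) ; exact: (nab' (Ordinal (ltp pp i))).
  pose s := swp pp ox xa xb nab.
  have os : #[s]%g = 2 by apply: ord_prime => //; [exact: swp2 | exact: swp_ne1].
  apply: P0c_trans (_ : P0c x s) _.
    apply: conn_K => //; [exact: swp_comm | by rewrite ox os | exact: swp_ne1].
  by apply: (inv_hub hT uv0); [exact: swp2 | exact: swp_ne1].
move/existsPn=> allin; exfalso.
pose I := [set (x ^+ (val i))%g a | i : 'I_p].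
pose F := [set z | x z == z].
have cI : #|I| = p.
  rewrite card_imset ?card_ord // => i j e.
  by apply: val_inj; exact: (orbit_inj pp ox xa (ltn_ord i) (ltn_ord j) e).
have cF : #|F| <= 1.
  apply/card_le1_eqP => z1 z2; rewrite !inE => /eqP h1 /eqP h2; exact: nf.
have sub : [set: T] \subset I :|: F.
  apply/subsetP => z _; rewrite inE; case: (eqVneq (x z) z) => xz.
    by rewrite orbC inE xz eqxx.
  move: (allin z); rewrite xz /= => /forallPn [i]; rewrite negbK => /eqP e.
  by apply/orP; left; apply/imsetP; exists i.
have le1 : #|T| <= p.+1.
  rewrite -cardsT; apply: leq_trans (subset_leq_card sub) _.
  by rewrite cardsU -cI; apply: leq_trans (leq_subr _ _) _; rewrite -addn1 leq_add2l.
have le2 : p <= #|T| by rewrite -cI max_card.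
have : (#|T| == p) || (#|T| == p.+1) by move: le1 le2; clear; lia.
case/orP => /eqP e.
  by apply: npn; rewrite e.
by apply: npn1; rewrite e.
Qed.

Lemma all_hub (x : {perm T}) : x <> 1%g -> P0c x (tperm u0 v0).
Proof.
move=> x1.
have o1 : 1 < #[x]%g.
  rewrite ltn_neqAle order_gt0 andbT eq_sym order_eq1; by apply/eqP.
set p := pdiv #[x]%g.
have pp : prime p := pdiv_prime o1.
have pd : p %| #[x]%g := pdiv_dvd _.
set y := (x ^+ (#[x]%g %/ p))%g.
have oy : #[y]%g = p := order_div_prime pp pd.
have y1 : y <> 1%g by move=> e; move: oy; rewrite e order1 => e1; move: pp; rewrite -e1.
apply: P0c_trans (_ : P0c x y) _.
  by apply: conn_pow => //; apply: mem_cycle.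
case: (eqVneq p 2) => [p2|p2].
  by apply: (inv_hub hT uv0) => //; rewrite -p2 -oy expg_order.
exact: odd_hub oy.
Qed.

Lemma P0_conn : P0_connected {perm T}.
Proof.
move=> x y x1 y1; apply: P0c_trans (all_hub x1) _.
exact: P0c_sym (all_hub y1).
Qed.

End Conn2.

Lemma geq_total : @ssrbool.total nat geq.
Proof. by move=> m k; rewrite /geq /= leq_total. Qed.
Lemma geq_trans : @ssrbool.transitive nat geq.
Proof. by move=> y x z /= h1 h2; apply: leq_trans h2 h1. Qed.
Lemma geq_anti : @ssrbool.antisymmetric nat geq.
Proof. by move=> m k /= /andP [h1 h2]; apply/eqP; rewrite eqn_leq h1 h2. Qed.

Definition mk (s : seq nat) := sort geq s.
Definition pflat (a : nat) (s : seq nat) :=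
  flatten [seq nseq (gcdn a m) (m %/ gcdn a m) | m <- s].

Lemma mk_eq s t : perm_eq s t -> mk s = mk t.
Proof. by move/(perm_sortP geq_total geq_trans geq_anti). Qed.

Lemma mk_eqP s t : mk s = mk t -> perm_eq s t.
Proof. by move/(perm_sortP geq_total geq_trans geq_anti). Qed.

Lemma perm_mk s : perm_eq (mk s) s.
Proof. by rewrite /mk perm_sort perm_refl. Qed.

Lemma pflat_perm a s t : perm_eq s t -> perm_eq (pflat a s) (pflat a t).
Proof. by move=> st; apply: perm_flatten; apply: perm_map. Qed.

Lemma pp_mk a s : part_pow a (mk s) = mk (pflat a s).
Proof. by apply: mk_eq; apply: pflat_perm; apply: perm_mk. Qed.

Lemma pflat_cat a s t : pflat a (s ++ t) = pflat a s ++ pflat a t.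
Proof. by rewrite /pflat map_cat flatten_cat. Qed.

Lemma count_pflat_cons (P : pred nat) a m s :
  count P (pflat a (m :: s)) = P (m %/ gcdn a m) * gcdn a m + count P (pflat a s).
Proof. by rewrite /pflat /= count_cat count_nseq. Qed.

Lemma count_pflat_nseq (P : pred nat) a k m :
  count P (pflat a (nseq k m)) = k * (P (m %/ gcdn a m) * gcdn a m).
Proof.
elim: k => [|k IH] //=; rewrite -/(pflat a (nseq k m)) in IH *.
by rewrite (count_pflat_cons P a m (nseq k m)) IH mulSn.
Qed.

Lemma count_pflat_nil (P : pred nat) a : count P (pflat a [::]) = 0.
Proof. by []. Qed.

Definition count_pflat := (count_pflat_nil, count_pflat_cons, count_pflat_nseq, pflat_cat, count_cat).

Lemma mk_sorted s : sorted geq (mk s).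
Proof. exact: sort_sorted geq_total s. Qed.

Lemma mk_part n s : all (fun m => 0 < m) s -> sumn s = n -> is_partition n (mk s).
Proof.
move=> pos sn; split; first exact: mk_sorted.
split; first by rewrite (perm_all _ (perm_mk s)).
by rewrite (perm_sumn (perm_mk s)).
Qed.

Lemma mk_ne1 n s m : m \in s -> 1 < m -> mk s <> nseq n 1.
Proof.
move=> ms m1 e; have : m \in mk s by rewrite mem_sort.
by rewrite e => /nseqP [em _]; rewrite em in m1.
Qed.

Lemma vx n s m : all (fun m => 0 < m) s -> sumn s = n -> m \in s -> 1 < m ->
  PT0_vertex n (mk s).
Proof. by move=> pos sn ms m1; split; [apply: mk_part | apply: (mk_ne1 ms m1)]. Qed.

Definition PTc n := clos_refl_trans (seq nat) (rstep (PT0_vertex n) PT0_adj).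

Lemma PTc_trans n x y z : PTc n x y -> PTc n y z -> PTc n x z.
Proof. exact: conn_trans. Qed.

Lemma PT0_adj_sym x y : PT0_adj x y -> PT0_adj y x.
Proof. by case=> ne [h|h]; split; try (by move=> e; apply: ne); [right|left]. Qed.

Lemma PTc_sym n x y : PTc n x y -> PTc n y x.
Proof. by apply: conn_sym; apply: PT0_adj_sym. Qed.

Lemma pt_step n a T T' : PT0_vertex n T -> PT0_vertex n T' -> 0 < a ->
  T' = part_pow a T -> PTc n T T'.
Proof.
move=> VT VT' a0 e; case: (eqVneq T T') => [->|ne]; first exact: rt_refl.
apply: rt_step; split=> //; split=> //; split; first by apply/eqP.
by left; exists a.
Qed.

Lemma pt_step_mk n a s s' : PT0_vertex n (mk s) -> PT0_vertex n (mk s') -> 0 < a ->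
  (forall P : pred nat, count P s' = count P (pflat a s)) -> PTc n (mk s) (mk s').
Proof.
move=> V V' a0 hc; apply: pt_step V V' a0 _.
by rewrite pp_mk; apply: mk_eq; apply/seq.permP.
Qed.

Section PTh.
Variable n : nat.
Hypothesis n9 : 9 <= n.

Definition H2 := mk (2 :: nseq (n - 2) 1).

Lemma allpos_nseq k m : 0 < m -> all (fun m => 0 < m) (nseq k m).
Proof. by move=> m0; rewrite all_nseq m0 orbT. Qed.

Lemma V_H2 : PT0_vertex n H2.
Proof.
apply: (vx (m := 2)); rewrite /= ?inE ?eqxx //.
  by rewrite allpos_nseq.
by rewrite sumn_nseq; lia.
Qed.

Lemma hub3 : PTc n (mk (3 :: nseq (n - 3) 1)) H2.
Proof.
have V3 : PT0_vertex n (mk (3 :: nseq (n - 3) 1)).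
  apply: (vx (m := 3)); rewrite /= ?inE ?eqxx ?allpos_nseq //.
  by rewrite sumn_nseq; lia.
have V32 : PT0_vertex n (mk (3 :: 2 :: nseq (n - 5) 1)).
  apply: (vx (m := 3)); rewrite /= ?inE ?eqxx ?allpos_nseq //.
  by rewrite sumn_nseq; lia.
apply: PTc_trans (_ : PTc n _ (mk (3 :: 2 :: nseq (n - 5) 1))) _.
  apply: PTc_sym; apply: (pt_step_mk (a := 2)) => // P.
  rewrite !count_pflat (_ : gcdn 2 3 = 1) // (_ : gcdn 2 2 = 2) // gcdn1 !divn1 divnn /=.
  rewrite ?count_nseq; case: (P 1); case: (P 3); case: (P 2) => /=; lia.
apply: (pt_step_mk (a := 3)) => //; first exact: V_H2.
move=> P; rewrite !count_pflat (_ : gcdn 3 3 = 3) // (_ : gcdn 3 2 = 1) // gcdn1 !divn1 divnn /=.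
rewrite ?count_nseq; case: (P 1); case: (P 3); case: (P 2) => /=; lia.
Qed.

Lemma hub33 : PTc n (mk (3 :: 3 :: nseq (n - 6) 1)) H2.
Proof.
have V3 : PT0_vertex n (mk (3 :: 3 :: nseq (n - 6) 1)).
  apply: (vx (m := 3)); rewrite /= ?inE ?eqxx ?allpos_nseq //.
  by rewrite sumn_nseq; lia.
have V32 : PT0_vertex n (mk (3 :: 3 :: 2 :: nseq (n - 8) 1)).
  apply: (vx (m := 3)); rewrite /= ?inE ?eqxx ?allpos_nseq //.
  by rewrite sumn_nseq; lia.
apply: PTc_trans (_ : PTc n _ (mk (3 :: 3 :: 2 :: nseq (n - 8) 1))) _.
  apply: PTc_sym; apply: (pt_step_mk (a := 2)) => // P.
  rewrite !count_pflat (_ : gcdn 2 3 = 1) // (_ : gcdn 2 2 = 2) // gcdn1 !divn1 divnn /=.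
  rewrite ?count_nseq; case: (P 1); case: (P 3); case: (P 2) => /=; lia.
apply: (pt_step_mk (a := 3)) => //; first exact: V_H2.
move=> P; rewrite !count_pflat (_ : gcdn 3 3 = 3) // (_ : gcdn 3 2 = 1) // gcdn1 !divn1 divnn /=.
rewrite ?count_nseq; case: (P 1); case: (P 3); case: (P 2) => /=; lia.
Qed.

Lemma type2 k f : 0 < k -> k * 2 + f = n -> PTc n (mk (nseq k 2 ++ nseq f 1)) H2.
Proof.
move=> k0 sn.
have VT : PT0_vertex n (mk (nseq k 2 ++ nseq f 1)).
  apply: (vx (m := 2)); rewrite ?all_cat ?allpos_nseq ?sumn_cat ?sumn_nseq //.
    lia.
  by rewrite mem_cat; apply/orP; left; apply/nseqP.
case: (leqP 3 f) => f3.
  have VU : PT0_vertex n (mk (3 :: nseq k 2 ++ nseq (f - 3) 1)).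
    apply: (vx (m := 3)); rewrite /= ?inE ?eqxx ?all_cat ?allpos_nseq ?sumn_cat ?sumn_nseq //.
    lia.
  apply: PTc_trans (_ : PTc n _ (mk (3 :: nseq k 2 ++ nseq (f - 3) 1))) _.
    apply: PTc_sym; apply: (pt_step_mk (a := 3)) => // P.
    rewrite !count_pflat (_ : gcdn 3 3 = 3) // (_ : gcdn 3 2 = 1) // gcdn1 !divn1 divnn /=.
    rewrite ?count_nseq; case: (P 1); case: (P 3); case: (P 2) => /=; lia.
  apply: PTc_trans hub3.
  apply: (pt_step_mk (a := 2)) => //.
    apply: (vx (m := 3)); rewrite /= ?inE ?eqxx ?allpos_nseq //.
    by rewrite sumn_nseq; lia.
  move=> P; rewrite !count_pflat (_ : gcdn 2 3 = 1) // (_ : gcdn 2 2 = 2) // gcdn1 !divn1 divnn /=.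
  rewrite ?count_nseq; case: (P 1); case: (P 3); case: (P 2) => /=; lia.
have VU : PT0_vertex n (mk (6 :: nseq (k - 3) 2 ++ nseq f 1)).
  apply: (vx (m := 6)); rewrite /= ?inE ?eqxx ?all_cat ?allpos_nseq ?sumn_cat ?sumn_nseq //.
  lia.
apply: PTc_trans (_ : PTc n _ (mk (6 :: nseq (k - 3) 2 ++ nseq f 1))) _.
  apply: PTc_sym; apply: (pt_step_mk (a := 3)) => // P.
  rewrite !count_pflat (_ : gcdn 3 6 = 3) // (_ : gcdn 3 2 = 1) // gcdn1 !divn1 /=.
  rewrite (_ : 6 %/ 3 = 2) //.
  rewrite ?count_nseq; case: (P 1); case: (P 2) => /=; lia.
apply: PTc_trans hub33.
apply: (pt_step_mk (a := 2)) => //.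
  apply: (vx (m := 3)); rewrite /= ?inE ?eqxx ?allpos_nseq //.
  by rewrite sumn_nseq; lia.
move=> P; rewrite !count_pflat (_ : gcdn 2 6 = 2) // (_ : gcdn 2 2 = 2) // gcdn1 !divn1 divnn /=.
rewrite (_ : 6 %/ 2 = 3) //.
rewrite ?count_nseq; case: (P 1); case: (P 3); case: (P 2) => /=; lia.
Qed.

Lemma typep p k f : prime p -> p != 2 -> 0 < k -> k * p + f = n ->
  ~ prime n -> ~ prime n.-1 -> PTc n (mk (nseq k p ++ nseq f 1)) H2.
Proof.
move=> pp p2 k0 sn npn npn1.
have p0 := prime_gt0 pp.
have p1 : 1 < p := prime_gt1 pp.
have g2p : gcdn 2 p = 1.
  apply/eqP; rewrite -/(coprime 2 p) prime_coprime //; apply/negP => d2.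
  case/primeP: pp => _ H; move: (H 2 d2) => /orP [//|/eqP e].
  by rewrite -e eqxx in p2.
have gp2 : gcdn p 2 = 1 by rewrite gcdnC.
have VT : PT0_vertex n (mk (nseq k p ++ nseq f 1)).
  apply: (vx (m := p)); rewrite ?all_cat ?allpos_nseq ?sumn_cat ?sumn_nseq //.
    lia.
  by rewrite mem_cat; apply/orP; left; apply/nseqP.
case: (leqP 2 f) => f2.
  have VU : PT0_vertex n (mk (2 :: nseq k p ++ nseq (f - 2) 1)).
    apply: (vx (m := 2)); rewrite /= ?inE ?eqxx ?all_cat ?allpos_nseq ?sumn_cat ?sumn_nseq //.
    lia.
  apply: PTc_trans (_ : PTc n _ (mk (2 :: nseq k p ++ nseq (f - 2) 1))) _.
    apply: PTc_sym; apply: (pt_step_mk (a := 2)) => // P.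
    rewrite !count_pflat g2p (_ : gcdn 2 2 = 2) // gcdn1 !divn1 divnn /=.
    rewrite ?count_nseq; case: (P 1); case: (P p); case: (P 2) => /=; lia.
  apply: (pt_step_mk (a := p)) => //; first exact: V_H2.
  move=> P; rewrite !count_pflat gp2 gcdnn gcdn1 !divn1 divnn p0 /=.
  rewrite ?count_nseq; case: (P 1); case: (P p); case: (P 2) => /=; nia.
have k2 : 2 <= k.
  case: (leqP 2 k) => // hk.
  have k1 : k = 1 by lia.
  rewrite k1 mul1n in sn.
  move: f2; rewrite ltnS leq_eqVlt ltnS leqn0 => /orP [/eqP f1|/eqP f0].
    by exfalso; apply: npn1; rewrite -sn f1 addn1.
  by exfalso; apply: npn; rewrite -sn f0 addn0.
have VU : PT0_vertex n (mk (2 * p :: nseq (k - 2) p ++ nseq f 1)).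
  apply: (vx (m := 2 * p)); rewrite /= ?inE ?eqxx ?all_cat ?allpos_nseq ?sumn_cat ?sumn_nseq //.
    by rewrite muln_gt0 p0.
    nia.
  by rewrite -(mul1n 1) ltn_mul.
apply: PTc_trans (_ : PTc n _ (mk (2 * p :: nseq (k - 2) p ++ nseq f 1))) _.
  apply: PTc_sym; apply: (pt_step_mk (a := 2)) => // P.
  rewrite !count_pflat gcdnMr g2p gcdn1 !divn1 mulKn //=.
  rewrite ?count_nseq; case: (P 1); case: (P p) => /=; lia.
apply: PTc_trans (_ : PTc n _ (mk (nseq p 2 ++ nseq ((k - 2) * p + f) 1))) _.
  apply: (pt_step_mk (a := p)) => //.
    apply: (vx (m := 2)); rewrite /= ?inE ?eqxx ?all_cat ?allpos_nseq ?sumn_cat ?sumn_nseq //.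
      nia.
    by rewrite mem_cat; apply/orP; left; apply/nseqP.
  move=> P; rewrite !count_pflat gcdnMl gcdnn gcdn1 !divn1 mulnK // divnn p0 /=.
  rewrite ?count_nseq; case: (P 1); case: (P 2) => /=; lia.
apply: type2 => //; nia.
Qed.

End PTh.

Definition sq (s : seq nat) := sumn [seq r * r | r <- s].

Lemma sq_perm s t : perm_eq s t -> sq s = sq t.
Proof. by move=> st; apply: perm_sumn; apply: perm_map. Qed.

Lemma sq_pflat a s :
  sq (pflat a s) = sumn [seq gcdn a r * ((r %/ gcdn a r) * (r %/ gcdn a r)) | r <- s].
Proof.
elim: s => [//|r s IH] /=.
by rewrite /sq /pflat /= map_cat sumn_cat map_nseq sumn_nseq -/(pflat a s) -/(sq (pflat a s)) IH mulnC.
Qed.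

Lemma sumn_map_le (f g : nat -> nat) s : (forall r, r \in s -> f r <= g r) ->
  sumn [seq f r | r <- s] <= sumn [seq g r | r <- s].
Proof.
elim: s => [//|r s IH] H /=; apply: leq_add; first by apply: H; rewrite inE eqxx.
by apply: IH => z zs; apply: H; rewrite inE zs orbT.
Qed.

Lemma sumn_map_lt (f g : nat -> nat) s m : (forall r, r \in s -> f r <= g r) ->
  m \in s -> f m < g m -> sumn [seq f r | r <- s] < sumn [seq g r | r <- s].
Proof.
elim: s => [//|r s IH] H ms lt /=.
have H' : forall z, z \in s -> f z <= g z by move=> z zs; apply: H; rewrite inE zs orbT.
have hr : f r <= g r by apply: H; rewrite inE eqxx.
move: ms; rewrite inE => /orP [/eqP e|ms].
  subst m; have := sumn_map_le H'; lia.
have := IH H' ms lt; lia.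
Qed.

Lemma mem_pflat a s x : x \in pflat a s -> exists2 r, r \in s & x = r %/ gcdn a r.
Proof.
case/flattenP => l /mapP [r rs ->] /nseqP [-> _].
by exists r.
Qed.

Lemma mem_pflat2 a s r : 0 < a -> r \in s -> r %/ gcdn a r \in pflat a s.
Proof.
move=> a0 rs; apply/flattenP; exists (nseq (gcdn a r) (r %/ gcdn a r)).
  by apply/mapP; exists r.
by apply/nseqP; split => //; rewrite gcdn_gt0 a0.
Qed.

Lemma sumn_pflat a s : sumn (pflat a s) = sumn s.
Proof.
elim: s => [//|r s IH] /=.
by rewrite /pflat /= sumn_cat sumn_nseq -/(pflat a s) IH divnK // dvdn_gcdr.
Qed.

Lemma count2 (P : pred nat) a b s : a != b -> all (fun r => (r == a) || (r == b)) s ->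
  count P s = P a * count_mem a s + P b * count_mem b s.
Proof.
move=> ab; elim: s => [|r s IH] /=; first by rewrite !muln0.
case/andP => /orP [/eqP ->|/eqP ->] /IH ->.
  by rewrite eqxx (negbTE ab) /=; case: (P a); case: (P b) => /=; lia.
by rewrite eqxx (eq_sym b a) (negbTE ab) /=; case: (P a); case: (P b) => /=; lia.
Qed.

Lemma to_hub n : 9 <= n -> ~ prime n -> ~ prime n.-1 ->
  forall T, PT0_vertex n T -> PTc n T (H2 n).
Proof.
move=> n9 npn npn1.
suff H : forall M T, sq T < M -> PT0_vertex n T -> PTc n T (H2 n).
  by move=> T; apply: (H (sq T).+1).
elim=> [//|M IH] T ltM VT.
have VT0 := VT; case: VT => [[sT [posT sumT]] neT].
have eT : mk T = T by apply: (sorted_sort geq_trans).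
have [m mT m1] : exists2 m, m \in T & 1 < m.
  case: (boolP (has (fun r => 1 < r) T)) => [/hasP [m mT m1]|/hasPn hT].
    by exists m.
  exfalso; apply: neT.
  have : all (pred1 1) T.
    apply/allP => r rT; move/allP: posT => /(_ r rT) r0; move: (hT r rT).
    by rewrite /= -leqNgt => r1; apply/eqP; apply/anti_leq; rewrite r1 r0.
  move/all_pred1P => e; rewrite e; congr nseq.
  by rewrite -sumT {2}e sumn_nseq mul1n.
set p := pdiv m.
have pp : prime p := pdiv_prime m1.
have pm : p %| m := pdiv_dvd m.
have p0 := prime_gt0 pp.
have posF : all (fun m => 0 < m) (pflat p T).
  apply/allP => x /mem_pflat [r rT ->].
  move/allP: posT => /(_ r rT) r0.
  by rewrite divn_gt0 ?gcdn_gt0 ?p0 // dvdn_leq // dvdn_gcdr.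
case: (boolP (mk (pflat p T) == nseq n 1)) => [/eqP e1|ne1].
  have allT : all (fun r => (r == p) || (r == 1)) T.
    apply/allP => r rT.
    have : r %/ gcdn p r \in mk (pflat p T) by rewrite mem_sort mem_pflat2.
    rewrite e1 => /nseqP [e _].
    have rg : r = gcdn p r by rewrite -{1}(divnK (dvdn_gcdr p r)) e mul1n.
    have : r %| p by rewrite rg dvdn_gcdl.
    by case/primeP: pp => _ Hp /Hp /orP [->|->]; rewrite ?orbT.
  have p1 : p != 1 by rewrite eq_sym neq_ltn prime_gt1.
  set k := count_mem p T; set f := count_mem 1 T.
  have pe : perm_eq T (nseq k p ++ nseq f 1).
    apply/seq.permP => P; rewrite count_cat !count_nseq (count2 P p1 allT).
    by [].
  have k0 : 0 < k.
    rewrite -has_count; apply/hasP; exists m => //=.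
    move/allP: allT => /(_ m mT) /orP [//|/eqP e]; by rewrite e in m1.
  have sn : k * p + f = n.
    by rewrite -sumT (perm_sumn pe) sumn_cat !sumn_nseq mulnC mul1n.
  rewrite -eT (mk_eq pe).
  case: (eqVneq p 2) => [p2|p2].
    by move: sn; rewrite p2 => sn; apply: type2.
  exact: typep.
have V' : PT0_vertex n (mk (pflat p T)).
  split; [apply: mk_part => //; by rewrite sumn_pflat | by apply/eqP].
have lt : sq (mk (pflat p T)) < sq T.
  rewrite (sq_perm (perm_mk _)) sq_pflat /sq.
  apply: (sumn_map_lt (m := m)) => // [r rT|].
    set g := gcdn p r; have := divnK (dvdn_gcdr p r); rewrite -/g => e.
    have g0 : 0 < g by rewrite gcdn_gt0 p0.
    rewrite -e; set q := r %/ g; rewrite mulnK //; nia.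
  have gm : gcdn p m = p by apply/gcdn_idPl.
  rewrite gm; have := divnK pm; set q := m %/ p => e.
  have q0 : 0 < q by rewrite divn_gt0 // dvdn_leq // ltnW.
  have p2 := prime_gt1 pp.
  rewrite -e; nia.
apply: PTc_trans (_ : PTc n T (mk (pflat p T))) _.
  by apply: (pt_step (a := p)) => //; rewrite -{1}eT pp_mk.
apply: IH V'; rewrite -ltnS; apply: leq_trans ltM; exact: lt.
Qed.

Lemma nseq_sorted k m : sorted geq (nseq k m).
Proof. by elim: k => [|[|k] IH] //=; rewrite leqnn. Qed.

Lemma mk_nseq k m : mk (nseq k m) = nseq k m.
Proof. exact: (sorted_sort geq_trans (nseq_sorted k m)). Qed.

Lemma elem_le_sumn r s : r \in s -> r <= sumn s.
Proof.
elim: s => [//|x s IH]; rewrite inE => /orP [/eqP ->|rs] /=; first exact: leq_addr.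
by apply: leq_trans (IH rs) _; apply: leq_addl.
Qed.

Lemma small_rest s : all (fun m => 0 < m) s -> sumn s <= 1 -> s = nseq (sumn s) 1.
Proof.
elim: s => [//|x s IH] /= /andP [x0 pos] le.
have x1 : x = 1 by lia.
subst x; have s0 : sumn s = 0 by lia.
by rewrite s0 (IH pos) ?s0.
Qed.

Lemma PT0_conn n : 9 <= n -> ~ prime n -> ~ prime n.-1 -> PT0_connected n.
Proof.
move=> n9 npn npn1 T T' VT VT'.
apply: PTc_trans (to_hub n9 npn npn1 VT) _.
exact: PTc_sym (to_hub n9 npn npn1 VT').
Qed.

Lemma PT0_two : PT0_connected 2.
Proof.
have key T : PT0_vertex 2 T -> T = [:: 2].
  case=> [[_ [pos sn]] ne].
  case: T pos sn ne => [//|a [|b [|c s]]] /=.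
  - by rewrite addn0 => _ ->.
  - case/and3P=> a0 b0 _; rewrite addn0 => e ne.
    by exfalso; apply: ne; congr cons; [|congr cons]; lia.
  - case/and4P=> a0 b0 c0 _ e; lia.
move=> T T' /key -> /key ->; exact: rt_refl.
Qed.

Lemma PT0_disc n p : prime p -> 3 <= p -> p <= n <= p.+1 -> ~ PT0_connected n.
Proof.
move=> pp p3 /andP [pn np] H.
have p0 := prime_gt0 pp.
pose T0 := mk (p :: nseq (n - p) 1).
have V0 : PT0_vertex n T0.
  apply: (vx (m := p)); rewrite /= ?inE ?eqxx ?p0 ?allpos_nseq //.
    by rewrite sumn_nseq; lia.
  by apply: leq_trans p3.
have VX : PT0_vertex n (mk (2 :: nseq (n - 2) 1)).
  apply: (vx (m := 2)); rewrite /= ?inE ?eqxx ?allpos_nseq //.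
  by rewrite sumn_nseq; lia.
have : mk (2 :: nseq (n - 2) 1) = T0.
  apply: (conn_inv (P := fun T => T = T0) _ (erefl T0) (H T0 _ V0 VX)).
  move=> a b -> _ Vb [nab [[c [c0 eb]]|[c [c0 ea]]]]; exfalso.
  -
    have g : gcdn c p = 1 \/ gcdn c p = p.
      by case/primeP: pp => _ Hp; move: (Hp _ (dvdn_gcdr c p)) => /orP [/eqP ->|/eqP ->]; [left|right].
    case: g => g.
      apply: nab; rewrite eb /T0 pp_mk; apply: mk_eq; apply/seq.permP => P.
      by rewrite !count_pflat g gcdn1 !divn1 /= ?count_nseq; case: (P 1); case: (P p) => /=; lia.
    case: Vb => _; apply; rewrite eb /T0 pp_mk -(mk_nseq n 1); apply: mk_eq; apply/seq.permP => P.
    rewrite !count_pflat g gcdn1 !divn1 divnn p0 /= ?count_nseq; case: (P 1) => /=; lia.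
  -
    case: Vb => [[sb [posb sumb]] neb].
    have : p \in part_pow c b by rewrite -ea /T0 mem_sort inE eqxx.
    rewrite /part_pow mem_sort => /mem_pflat [r rb er].
    have r0 : 0 < r by move/allP: posb => /(_ r rb).
    have rle : r <= n by rewrite -sumb elem_le_sumn.
    have g0 : 0 < gcdn c r by rewrite gcdn_gt0 c0.
    have e := divnK (dvdn_gcdr c r); rewrite -er in e.
    have g1 : gcdn c r = 1.
      case: (leqP (gcdn c r) 1) => g1; first by lia.
      by exfalso; move: rle; rewrite -e; nia.
    rewrite g1 muln1 in e; subst r.
    have pr := perm_to_rem rb.
    have posr : all (fun m => 0 < m) (rem p b).
      by apply/allP => x /mem_rem xb; move/allP: posb => /(_ x xb).
    have sr : sumn (rem p b) = n - p.
      by move: (perm_sumn pr) => /=; lia.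
    have := small_rest posr (ltac:(lia)); rewrite sr => er2.
    apply: nab; rewrite /T0 -(sorted_sort geq_trans sb) -er2.
    by apply: mk_eq; rewrite perm_sym.
move=> e; have : 2 \in T0 by rewrite -e mem_sort inE eqxx.
rewrite mem_sort inE => /orP [/eqP e2|/nseqP [e2 _]].
  by move: p3; rewrite -e2.
by [].
Qed.

Lemma C_cases0 n : 2 <= n -> ~ prime n -> ~ prime n.-1 -> n = 2 \/ 9 <= n.
Proof.
case: n => [|[|[|[|[|[|[|[|[|n]]]]]]]]] // n2 h1 h2.
all: try (by exfalso; apply: h1); try (by exfalso; apply: h2); try (by left).
by right.
Qed.

Lemma C_cases n : 2 <= n -> n = 2 \/ (~ prime n /\ ~ prime n.-1) ->
  n = 2 \/ (9 <= n /\ ~ prime n /\ ~ prime n.-1).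
Proof.
move=> n2 [->|[h1 h2]]; first by left.
by case: (C_cases0 n2 h1 h2) => [->|h]; [left|right].
Qed.

Lemma notC_cases n : 2 <= n -> ~ (n = 2 \/ (~ prime n /\ ~ prime n.-1)) ->
  exists p, [/\ prime p, 3 <= p & p <= n <= p.+1].
Proof.
move=> n2 nC.
case: (boolP (prime n)) => pn.
  exists n; split=> //; last by rewrite leqnn leqnSn.
  case: (leqP 3 n) => // lt; exfalso; apply: nC; left; lia.
case: (boolP (prime n.-1)) => pn1.
  exists n.-1; split=> //.
    case: (leqP 3 n.-1) => // lt; exfalso.
    have : n = 3 by move: (prime_gt1 pn1); lia.
    by move=> e; move: pn; rewrite e.
  by apply/andP; split; lia.
by exfalso; apply: nC; right; split; apply/negP.
Qed.

Lemma P0_two : P0_connected {perm 'I_2}.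
Proof.
move=> x y x1 y1.
have c : #|[pred z : {perm 'I_2} | z != 1%g]| <= 1.
  by rewrite (cardC1 (1%g : {perm 'I_2})) card_Sn.
have -> : x = y.
  by move/card_le1_eqP: c => H; apply: H; rewrite inE; apply/eqP.
exact: rt_refl.
Qed.

Lemma P0_iff n : 2 <= n ->
  (P0_connected {perm 'I_n} <-> (n = 2 \/ (~ prime n /\ ~ prime n.-1))).
Proof.
move=> n2; split.
  move=> H; apply: NNPP => nC.
  have [p [pp p3 pn]] := notC_cases n2 nC.
  exact: P0_disconn pp p3 pn H.
move/(C_cases n2) => [->|[n9 [h1 h2]]]; first exact: P0_two.
have n1 : 1 < n by [].
have hT : 9 <= #|'I_n| by rewrite card_ord.
have h1' : ~ prime #|'I_n| by rewrite card_ord.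
have h2' : ~ prime #|'I_n|.-1 by rewrite card_ord.
exact: (@P0_conn 'I_n hT h1' h2' (Ordinal (ltnW n1)) (Ordinal n1) isT).
Qed.

Theorem corollaryC (n : nat) (hn : 2 <= n) :
  (power_graph_2connected {perm 'I_n} <-> (n = 2 \/ (~ prime n /\ ~ prime n.-1))) /\
  (P0_connected {perm 'I_n} <-> (n = 2 \/ (~ prime n /\ ~ prime n.-1))) /\
  (tP0_connected {perm 'I_n} <-> (n = 2 \/ (~ prime n /\ ~ prime n.-1))) /\
  (PT0_connected n <-> (n = 2 \/ (~ prime n /\ ~ prime n.-1))) /\
  (O0_connected {perm 'I_n} <-> (n = 2 \/ (~ prime n /\ ~ prime n.-1))).
Proof.
have HP := P0_iff hn.
split; first by rewrite two_conn_iff.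
split; first exact: HP.
split; first by rewrite tP0_iff.
split.
  split.
    move=> H; apply: NNPP => nC.
    have [p [pp p3 pn]] := notC_cases hn nC.
    exact: PT0_disc pp p3 pn H.
  move/(C_cases hn) => [->|[n9 [h1 h2]]]; first exact: PT0_two.
  exact: PT0_conn.
split.
  move=> H; apply: NNPP => nC.
  have [p [pp p3 pn]] := notC_cases hn nC.
  exact: O0_disconn pp p3 pn H.
by move/HP; apply: O0_of_P0.
Qed.
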